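(* Let $(X,S)$ be an association scheme and fix $x\in X$. Then $\mathbb{Q}T(x)\cap \mathrm{M}_X(\mathbb{Z})=\mathbb{Z}T(x)$ (intersection taken inside $\mathrm{M}_X(\mathbb{Q})$) if and only if $\dim_{\mathbb{C}}\mathbb{C}T(x)=\dim_K KT(x)$ for every field $K$.
   Context: An association scheme $(X,S)$ consists of a finite set $X$ and a partition $S$ of $X\times X$ such that: (1) $1:=\{(x,x)\mid x\in X\}\in S$; (2) for $s\in S$, $s^*:=\{(y,x)\mid (x,y)\in s\}\in S$; (3) for $s,t,u\in S$ there is a nonnegative integer $p_{st}^u$ with $p_{st}^u=|xs\cap ty|$ whenever $(x,y)\in u$, where $xs=\{y\mid (x,y)\in s\}$ and $ty=\{z\mid (z,y)\in t\}$. For $s\subseteq X\times X$ the adjacency matrix $\sigma_s$ has $(y,z)$-entry $1$ if $(y,z)\in s$ and $0$ otherwise. Fix $x\in X$; for $s\in S$ let $E_s^*$ be the diagonal $0/1$ matrix indexed by $X$ whose $(y,y)$-entry is $1$ iff $y\in xs$. For a commutative ring $R$ with $1$, regard $\sigma_s,E_s^*$ as elements of $\mathrm{M}_X(R)$ (the ring of matrices over $R$ with rows and columns indexed by $X$); the Terwilliger algebra $RT(x)$ is the $R$-subalgebra of $\mathrm{M}_X(R)$ generated by $\{E_s^*\sigma_tE_u^*\mid s,t,u\in S\}$. In particular $\mathbb{Z}T(x)\subseteq \mathrm{M}_X(\mathbb{Z})$ and $\mathbb{Q}T(x)\subseteq\mathrm{M}_X(\mathbb{Q})$. *)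

(* Defs.v *)
From HB Require Import structures.
From mathcomp Require Import all_boot all_order all_algebra.
From mathcomp Require Import reals Rstruct complex.
Set Implicit Arguments. Unset Strict Implicit. Unset Printing Implicit Defensive.
Import GRing.Theory Num.Theory.
Local Open Scope ring_scope.

Definition Ccomplex : fieldType := (Rdefinitions.R)[i].

Section Scheme.
Variable X : finType.

Definition diag_rel : {set X * X} := [set p | p.1 == p.2].
Definition transp_rel (s : {set X * X}) : {set X * X} := [set p | (p.2, p.1) \in s].

Definition is_assoc_scheme (S : {set {set X * X}}) : Prop :=
  [/\ partition S [set: X * X],
      diag_rel \in S,
      (forall s, s \in S -> transp_rel s \in S) &
      (forall s t u, s \in S -> t \in S -> u \in S ->
         exists p : nat, forall y z, (y, z) \in u ->
           #|[set w | ((y, w) \in s) && ((w, z) \in t)]| = p)].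

(* Matrices indexed by X are represented as 'M_#|X|, row/column i
   corresponding to the element enum_val i of X. *)
Definition adjmx (R : pzRingType) (s : {set X * X}) : 'M[R]_#|X| :=
  \matrix_(i, j) (((enum_val i, enum_val j) \in s) : nat)%:R.

Definition Estar (R : pzRingType) (x : X) (s : {set X * X}) : 'M[R]_#|X| :=
  \matrix_(i, j) (((i == j) && ((x, enum_val i) \in s)) : nat)%:R.

End Scheme.

Inductive in_subalg (R : comNzRingType) (n : nat) (G : 'M[R]_n -> Prop)
  : 'M[R]_n -> Prop :=
| subalg_gen A : G A -> in_subalg G A
| subalg_one : in_subalg G 1%:M
| subalg_add A B : in_subalg G A -> in_subalg G B -> in_subalg G (A + B)
| subalg_scale (a : R) A : in_subalg G A -> in_subalg G (a *: A)
| subalg_mul A B : in_subalg G A -> in_subalg G B -> in_subalg G (A *m B).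

Definition terw_gens (R : comNzRingType) (X : finType) (S : {set {set X * X}})
  (x : X) (A : 'M[R]_#|X|) : Prop :=
  exists s t u, [/\ s \in S, t \in S, u \in S &
                    A = Estar R x s *m adjmx R t *m Estar R x u].

Arguments terw_gens R {X} S x A.

Definition terwilliger (R : comNzRingType) (X : finType) (S : {set {set X * X}})
  (x : X) : 'M[R]_#|X| -> Prop :=
  in_subalg (@terw_gens R X S x).
Arguments terwilliger R {X} S x.

Definition has_dim (K : fieldType) (n : nat) (P : 'M[K]_n -> Prop) (d : nat) : Prop :=
  exists U : {vspace 'M[K]_n}, (forall A, A \in U <-> P A) /\ \dim U = d.

(* Main.v *)
Require Import Defs.
From HB Require Import structures.
From mathcomp Require Import all_boot all_order all_algebra.
From mathcomp Require Import reals Rstruct complex.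
From Stdlib Require Import Classical.
Set Implicit Arguments. Unset Strict Implicit. Unset Printing Implicit Defensive.
Import GRing.Theory Num.Theory.
Local Open Scope ring_scope.
Lemma ex_minP (Q : nat -> Prop) : (exists m, Q m) ->
  exists m, Q m /\ forall m', Q m' -> (m <= m')%N.
Proof.
move=> [m Qm]; apply: NNPP => H.
suff: forall j i, (i <= j)%N -> ~ Q i by move/(_ m m (leqnn m)).
elim=> [|j IH] i.
  rewrite leqn0 => /eqP -> Q0; apply: H; exists 0%N; split=> // m' _.
rewrite leq_eqVlt => /orP[/eqP -> Qj|]; last by rewrite ltnS; exact: IH.
apply: H; exists j.+1; split=> // m' Qm'; rewrite leqNgt; apply/negP => lt.
by apply: (IH m' _ Qm'); rewrite -ltnS.
Qed.

Definition zspan n (P : 'rV[int]_n -> Prop) :=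
  [/\ P 0, (forall u v, P u -> P v -> P (u + v)) & (forall (a : int) u, P u -> P (a *: u))].

Lemma zspan_mul n (P : 'rV[int]_n -> Prop) k (c : 'rV[int]_k) (M : 'M_(k, n)) :
  zspan P -> (forall i, P (row i M)) -> P (c *m M).
Proof.
move=> [P0 PD PZ] PM; rewrite mulmx_sum_row; apply: big_ind => // i _; exact: PZ.
Qed.

Lemma lsub_eq n (v : 'rV[int]_(1 + n)) : lsubmx v = (v ord0 ord0)%:M.
Proof.
apply/matrixP => i j; rewrite (ord1 i) (ord1 j) !mxE /=; congr (v _ _); exact: val_inj.
Qed.

Lemma row_mx_hd n (a : int) (w : 'rV[int]_n) : (row_mx (a%:M : 'rV_1) w : 'rV_(n.+1)) ord0 ord0 = a.
Proof.
transitivity (row_mx (a%:M : 'rV_1) w 0 (lshift n ord0)).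
  by congr (fun_of_matrix _ _ _); apply: val_inj.
by rewrite row_mxEl mxE.
Qed.

Lemma scal0 : (0 : int)%:M = 0 :> 'rV_1.
Proof. by apply/matrixP => i j; rewrite !mxE mul0rn. Qed.

Lemma noeth n (P : 'rV[int]_n -> Prop) : zspan P ->
  exists k (M : 'M[int]_(k, n)), forall v, P v <-> exists c : 'rV_k, v = c *m M.
Proof.
elim: n P => [|n IH] P zP; case: (zP) => P0 PD PZ.
  exists 0%N, 0 => v; have -> : v = 0 by apply/matrixP => i [].
  by split=> // _; exists 0; rewrite mulmx0.
change (exists k (M : 'M[int]_(k, 1 + n)), forall v : 'rV_(1 + n), P v <-> exists c : 'rV_k, v = c *m M).
pose P' := fun w : 'rV[int]_n => P (row_mx (0 : 'rV_1) w).
have zP' : zspan P'.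
  split; rewrite /P'; first by rewrite row_mx0.
    by move=> u w Pu Pw; rewrite -[X in row_mx X _](addr0 0) -add_row_mx; exact: PD.
  by move=> a u Pu; rewrite -[X in row_mx X _](scaler0 _ a) -scale_row_mx; exact: PZ.
have [k' [M' HM']] := IH P' zP'.
have dec : forall v : 'rV[int]_(1 + n), v = row_mx ((v ord0 ord0)%:M) (rsubmx (v : 'rV_(1 + n))).
  by move=> v; rewrite -lsub_eq hsubmxK.
have Ptl : forall v : 'rV[int]_(1 + n), P v -> v ord0 ord0 = 0 -> P' (rsubmx (v : 'rV_(1 + n))).
  move=> v Pv v0; rewrite /P'.
  have -> : (0 : 'rV[int]_1) = (v ord0 ord0)%:M by rewrite v0; apply/matrixP => i j; rewrite !mxE mul0rn.
  by rewrite -dec.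
case: (classic (exists v, P v /\ v ord0 ord0 != 0)) => [[v1 [Pv1 nz1]]|none].
  pose Q m := exists v, [/\ P v, absz (v ord0 ord0) = m & (0 < m)%N].
  have [m0 [[v0 [Pv0 Hv0 m0pos]] minm]] : exists m, Q m /\ forall m', Q m' -> (m <= m')%N.
    by apply: ex_minP; exists (absz (v1 ord0 ord0)); exists v1; split=> //; rewrite absz_gt0.
  set g := v0 ord0 ord0.
  have gnz : g != 0 by rewrite -absz_gt0 /g Hv0.
  have dvdg : forall v, P v -> (g %| v ord0 ord0)%Z.
    move=> v Pv; set a := v ord0 ord0.
    have Pw : P (v + (- (a %/ g)%Z) *: v0) by apply: PD => //; exact: PZ.
    have ew : (v + (- (a %/ g)%Z) *: v0) ord0 ord0 = (a %% g)%Z.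
      by rewrite !mxE -/a -/g mulNr {1}(divz_eq a g) addrAC subrr add0r.
    apply/dvdz_mod0P; apply/eqP; apply: contraT => nzr.
    have lt : (absz (a %% g)%Z < absz g)%N.
      by rewrite -ltz_nat !abszE (ger0_norm (modz_ge0 _ gnz)) ltz_mod.
    have Qr : Q (absz (a %% g)%Z).
      by exists (v + (- (a %/ g)%Z) *: v0); split=> //; rewrite ?ew // absz_gt0.
    by move: (minm _ Qr); rewrite -Hv0 -/g leqNgt lt.
  exists (1 + k')%N, (col_mx v0 (row_mx (0 : 'M_(k', 1)) M' : 'M_(k', 1 + n))) => v; split.
    move=> Pv; set q := ((v ord0 ord0) %/ g)%Z.
    set w := v + (- q) *: v0.
    have Pw : P w by apply: PD => //; exact: PZ.
    have w0 : w ord0 ord0 = 0.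
      by rewrite !mxE mulNr /q divzK ?dvdg // subrr.
    have [c' Hc'] := (HM' _).1 (Ptl w Pw w0).
    exists (row_mx (q%:M : 'rV_1) c').
    rewrite mul_row_col mul_mx_row mulmx0 -scalemx1 -scalemxAl mul1mx -Hc'.
    have hw := dec w; rewrite w0 scal0 in hw.
    by rewrite -hw /w scaleNr addrC subrK.
  move=> [c ->]; rewrite -[c]hsubmxK mul_row_col lsub_eq mul_scalar_mx mul_mx_row mulmx0.
  apply: PD; first exact: PZ.
  by apply/(HM' _).2; exists (rsubmx c).
have allz : forall v, P v -> v ord0 ord0 = 0.
  by move=> v Pv; apply: NNPP => /eqP nz; apply: none; exists v.
exists k', (row_mx (0 : 'M_(k', 1)) M') => v; split.
  move=> Pv; have [c Hc] := (HM' _).1 (Ptl v Pv (allz v Pv)).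
  by exists c; rewrite mul_mx_row mulmx0 -Hc -scal0 -(allz v Pv) -dec.
move=> [c ->]; rewrite mul_mx_row mulmx0; apply/(HM' _).2; by exists c.
Qed.
Lemma smith_conv k N (M : 'M[int]_(k, N)) :
  exists (dv : 'rV[int]_N) (R0 : 'M[int]_N), R0 \in unitmx /\
  forall v, (exists c : 'rV_k, v = c *m M) <-> (exists c : 'rV_N, v = c *m (diag_mx dv *m R0)).
Proof.
have [L uL [R0 uR [d _ eM]]] := int_Smith_normal_form M.
set D := \matrix_(i, j) _ in eM.
pose dv : 'rV[int]_N := \row_j (d`_j *+ (j < k)%N).
have eD : D = pid_mx k *m diag_mx dv.
  apply/matrixP => i j; rewrite mul_mx_diag !mxE ltn_ord andbT.
  case: eqP => [e|_]; last by rewrite mul0r.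
  by rewrite mul1r -e ltn_ord.
have eD' : diag_mx dv = pid_mx k *m D.
  rewrite eD mulmxA mul_pid_mx minnn.
  apply/matrixP => i j; rewrite mul_mx_diag !mxE.
  have [->|ne] := eqVneq i j.
    by rewrite eqxx /= !minnn; case: (j < k)%N; rewrite ?mul1r ?mul0r ?mulr0n.
  have ne' : (i == j :> nat) = false by apply/negbTE; apply: contra ne => /eqP e; apply/eqP/val_inj.
  by rewrite ?ne' /= mulr0n mul0r.
exists dv, R0; split => // v; split => -[c ->].
  by exists (c *m L *m pid_mx k); rewrite eM eD !mulmxA.
exists (c *m pid_mx k *m invmx L); rewrite eM eD' !mulmxA.
by rewrite -[c *m _ *m _ *m L]mulmxA mulVmx // mulmx1.
Qed.

Lemma Estar_map (R : comNzRingType) (X : finType) (x : X) s :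
  Estar R x s = map_mx intr (Estar int x s).
Proof. by apply/matrixP => i j; rewrite !mxE rmorph_nat. Qed.

Lemma adjmx_map (R : comNzRingType) (X : finType) s :
  adjmx R s = map_mx intr (adjmx int s :'M_#|X|).
Proof. by apply/matrixP => i j; rewrite !mxE rmorph_nat. Qed.

Lemma gens_map (R : comNzRingType) (X : finType) S (x : X) A :
  terw_gens R S x A -> exists B, terw_gens int S x B /\ A = map_mx intr B.
Proof.
move=> [s [t [u [sS tS uS ->]]]].
exists (Estar int x s *m adjmx int t *m Estar int x u); split.
  by exists s, t, u.
by rewrite !map_mxM -Estar_map -adjmx_map -Estar_map.
Qed.

Lemma map_terw (R : comNzRingType) (X : finType) S (x : X) B :
  terwilliger int S x B -> terwilliger R S x (map_mx intr B).
Proof.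
elim=> {B} [B [s [t [u [sS tS uS ->]]]]| |A B _ IHA _ IHB|a A _ IHA|A B _ IHA _ IHB].
- apply: subalg_gen; exists s, t, u; split=> //.
  by rewrite !map_mxM -Estar_map -adjmx_map -Estar_map.
- by rewrite map_scalar_mx rmorph1; apply: subalg_one.
- by rewrite map_mxD; apply: subalg_add.
- by rewrite map_mxZ; apply: subalg_scale.
- by rewrite map_mxM; apply: subalg_mul.
Qed.

Lemma vec_mx_sum (R : comNzRingType) m1 m2 k (c : 'rV[R]_k) (N : 'M[R]_(k, m1 * m2)) :
  vec_mx (c *m N) = \sum_i c 0 i *: vec_mx (row i N).
Proof. by rewrite mulmx_sum_row linear_sum; apply: eq_bigr => i _; rewrite linearZ. Qed.

Lemma terw0 (R : comNzRingType) (X : finType) S (x : X) : terwilliger R S x 0.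
Proof. by rewrite -(scale0r 1%:M); apply: subalg_scale; apply: subalg_one. Qed.

Lemma terw_lin (R : comNzRingType) (X : finType) S (x : X) k (a : 'I_k -> R) (B : 'I_k -> 'M[R]_#|X|) :
  (forall i, terwilliger R S x (B i)) -> terwilliger R S x (\sum_i a i *: B i).
Proof.
move=> HB; apply: (big_ind (terwilliger R S x)).
- exact: terw0.
- by move=> A1 A2 H1 H2; apply: subalg_add.
- by move=> i _; exact: subalg_scale (HB i).
Qed.

Definition Spn (R : comNzRingType) n k (M : 'M[int]_(k, n * n)) (A : 'M[R]_n) :=
  exists c : 'rV[R]_k, A = vec_mx (c *m map_mx intr M).

Lemma Spn_lin (R : comNzRingType) n k (M : 'M[int]_(k, n * n)) m (a : 'I_m -> R) B :
  (forall i, Spn M (B i)) -> Spn M (\sum_i a i *: B i).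
Proof.
move=> HB; apply: big_ind.
- by exists 0; rewrite mul0mx linear0.
- by move=> ? ? [c1 ->] [c2 ->]; exists (c1 + c2); rewrite mulmxDl linearD.
- by move=> i _; have [c ->] := HB i; exists (a i *: c); rewrite -scalemxAl linearZ.
Qed.

Lemma terwP (X : finType) S (x : X) k (M : 'M[int]_(k, #|X| * #|X|))
  (HM : forall v, terwilliger int S x (vec_mx v) <-> exists c : 'rV_k, v = c *m M)
  (R : comNzRingType) (A : 'M[R]_#|X|) :
  terwilliger R S x A <-> Spn M A.
Proof.
have rowT i : terwilliger int S x (vec_mx (row i M)).
  by apply/HM; exists (delta_mx 0 i); rewrite -rowE.
have rowE' (i : 'I_k) : vec_mx (row i (map_mx (intr : int -> R) M)) = map_mx intr (vec_mx (row i M)).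
  by rewrite map_vec_mx map_row.
have Smap B : terwilliger int S x B -> Spn M (map_mx (intr : int -> R) B).
  move=> TB; have [c Hc] : exists c, mxvec B = c *m M by apply/HM; rewrite mxvecK.
  by exists (map_mx intr c); rewrite -map_mxM -Hc map_mxvec mxvecK.
split.
  elim=> {A} [A /gens_map [B [gB ->]]| |A B _ IHA _ IHB|a A _ IHA|A B _ [a ->] _ [b ->]].
  - by apply: Smap; apply: subalg_gen.
  - have -> : (1%:M : 'M[R]_#|X|) = map_mx intr 1%:M by rewrite map_scalar_mx rmorph1.
    by apply: Smap; apply: subalg_one.
  - have [c1 ->] := IHA; have [c2 ->] := IHB.
    by exists (c1 + c2); rewrite mulmxDl linearD.
  - by have [c ->] := IHA; exists (a *: c); rewrite -scalemxAl linearZ.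
  - rewrite !vec_mx_sum mulmx_suml.
    under eq_bigr do rewrite -scalemxAl mulmx_sumr.
    apply: Spn_lin => i; under eq_bigr do rewrite -scalemxAr.
    apply: Spn_lin => j; rewrite !rowE' -map_mxM; apply: Smap.
    by apply: subalg_mul; apply: rowT.
move=> [c ->]; rewrite vec_mx_sum; apply: terw_lin => i.
by rewrite rowE'; apply: map_terw.
Qed.
Lemma vec_diag_expand (K : fieldType) n (dv : 'rV[int]_(n * n)) (R0 : 'M[int]_(n * n)) (c : 'rV[K]_(n * n)) :
  vec_mx (c *m map_mx intr (diag_mx dv *m R0)) =
  \sum_j (c 0 j * (dv 0 j)%:~R) *: vec_mx (row j (map_mx intr R0)).
Proof.
rewrite map_mxM mulmxA map_diag_mx mul_mx_diag vec_mx_sum.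
by apply: eq_bigr => j _; rewrite !mxE.
Qed.

Lemma dimK (K : fieldType) n (dv : 'rV[int]_(n * n)) (R0 : 'M[int]_(n * n))
  (uR : R0 \in unitmx) (P : 'M[K]_n -> Prop)
  (HP : forall A, P A <-> Spn (diag_mx dv *m R0) A) e :
  has_dim P e <-> e = #|[set j | (dv 0 j)%:~R != 0 :> K]|.
Proof.
set J := [set j | _].
have uR' : map_mx (intr : int -> K) R0 \in unitmx.
  by rewrite unitmxE det_map_mx rmorph_unit // -unitmxE.
pose Xt := [tuple vec_mx (row (enum_val i) (map_mx (intr : int -> K) R0)) | i < #|J|].
have XtE (i : 'I_#|J|) : Xt`_i = vec_mx (row (enum_val i) (map_mx intr R0)).
  by rewrite -tnth_nth tnth_mktuple.
have rowS j : j \in J -> Spn (diag_mx dv *m R0) (vec_mx (row j (map_mx (intr : int -> K) R0))).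
  rewrite inE => nz; exists (((dv 0 j)%:~R)^-1 *: delta_mx 0 j).
  rewrite vec_diag_expand (bigD1 j) //= big1 => [|l nlj]; last first.
    by rewrite !mxE (negbTE nlj) andbF mulr0 mul0r scale0r.
  by rewrite !mxE !eqxx mulr1 mulVf // scale1r addr0.
have memX A : A \in <<Xt>>%VS <-> P A.
  split => [/coord_span -> | /HP [c ->]].
    apply/HP; apply: Spn_lin => i; rewrite XtE; apply: rowS; exact: enum_valP.
  rewrite vec_diag_expand; apply: rpred_sum => j _.
  case: (boolP (j \in J)) => jJ.
    apply: rpredZ; apply: memv_span.
    have -> : vec_mx (row j (map_mx (intr : int -> K) R0)) = tnth Xt (enum_rank_in jJ j).
      by rewrite tnth_mktuple enum_rankK_in.
    exact: mem_tnth.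
  by move: jJ; rewrite inE negbK => /eqP ->; rewrite mulr0 scale0r mem0v.
have freeX : free Xt.
  apply/freeP => kk Hs i.
  pose u := \sum_l kk l *: delta_mx 0 (enum_val l) : 'rV[K]_(n * n).
  have Hu : u *m map_mx intr R0 = 0.
    apply: (can_inj vec_mxK); rewrite linear0 -{}Hs mulmx_suml linear_sum.
    by apply: eq_bigr => l _; rewrite XtE -scalemxAl linearZ rowE.
  have u0 : u = 0 by rewrite -(mulmxK uR' u) Hu mul0mx.
  have := congr1 (fun w : 'rV_(n * n) => w 0 (enum_val i)) u0.
  rewrite /= summxE (bigD1 i) //= big1 => [|l nli]; last first.
    rewrite !mxE eqxx /=; case: eqP => [/enum_val_inj ee|_]; last by rewrite mulr0.
    by rewrite ee eqxx in nli.
  by rewrite !mxE !eqxx mulr1 addr0.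
have dimX : \dim <<Xt>> = #|J| by rewrite (eqP freeX) size_tuple.
split.
  move=> [U [HU <-]]; rewrite -dimX; congr (\dim _).
  by apply/vspaceP => A; apply/idP/idP => H; [apply/memX/HU | apply/HU/memX].
by move=> ->; exists <<Xt>>%VS; split.
Qed.
Lemma Fp_intr0 p (d : int) : prime p -> (p %| absz d)%N -> (d%:~R : 'F_p) = 0.
Proof.
move=> pr pd; have /dvdzP [q ->] : (p%:Z %| d)%Z by rewrite dvdzE absz_nat.
by rewrite intrM -pmulrn pchar_Fp_0 // mulr0.
Qed.

Lemma small_int (a : int) : (absz a <= 1)%N -> [\/ a = 0, a = 1 | a = -1].
Proof. by case: a => [[|[|m]]|[|m]] //= _; [exact: Or31|exact: Or32|exact: Or33]. Qed.

Lemma cube_int (a : int) : (absz a <= 1)%N -> a * a * a = a.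
Proof. by case/small_int => ->. Qed.

Lemma intrC_neq0 (d : int) : d != 0 -> (d%:~R : Ccomplex) != 0.
Proof. by move=> nz; rewrite /Ccomplex (@intr_eq0 (Rdefinitions.R)[i]). Qed.

Lemma unit_int (a b : int) : a * b = 1 -> (absz b <= 1)%N.
Proof.
move=> /(congr1 absz); rewrite abszM /= => /eqP; rewrite muln_eq1 => /andP[_ /eqP ->] //.
Qed.

Lemma rowS (K : fieldType) n (dv : 'rV[int]_(n * n)) (R0 : 'M[int]_(n * n)) j :
  (dv 0 j)%:~R != 0 :> K ->
  Spn (diag_mx dv *m R0) (vec_mx (row j (map_mx (intr : int -> K) R0))).
Proof.
move=> nz; exists (((dv 0 j)%:~R)^-1 *: delta_mx 0 j).
rewrite vec_diag_expand (bigD1 j) //= big1 => [|l nlj]; last first.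
  by rewrite !mxE (negbTE nlj) andbF mulr0 mul0r scale0r.
by rewrite !mxE !eqxx mulr1 mulVf // scale1r addr0.
Qed.

Lemma map_intr_inj m1 m2 : injective (map_mx (intr : int -> rat) : 'M_(m1, m2) -> 'M_(m1, m2)).
Proof.
move=> A B /matrixP H; apply/matrixP => i j; have := H i j; rewrite !mxE; exact: intr_inj.
Qed.

Theorem proposition2p1 (X : finType) (S : {set {set X * X}}) (x : X) :
  is_assoc_scheme S ->
  ((forall A : 'M[rat]_#|X|,
      (terwilliger rat S x A /\ exists B : 'M[int]_#|X|, A = map_mx intr B)
      <-> (exists B : 'M[int]_#|X|, terwilliger int S x B /\ A = map_mx intr B))
   <->
   (forall (K : fieldType) (d : nat),
      has_dim (terwilliger Ccomplex S x) d <-> has_dim (terwilliger K S x) d)).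
Proof.
move=> _.
have zP : zspan (fun v : 'rV[int]_(#|X| * #|X|) => terwilliger int S x (vec_mx v)).
  split.
  - by rewrite linear0; exact: terw0.
  - by move=> u v Hu Hv; rewrite linearD; apply: subalg_add.
  - by move=> a u Hu; rewrite linearZ; apply: subalg_scale.
have [k [M HM]] := noeth zP.
have [dv [R0 [uR HR]]] := smith_conv M.
have HZ : forall v, terwilliger int S x (vec_mx v) <-> exists c, v = c *m (diag_mx dv *m R0).
  by move=> v; split => [/HM/HR | /HR/HM].
have HT : forall (R : comNzRingType) A, terwilliger R S x A <-> Spn (diag_mx dv *m R0) A.
  by move=> R A; apply: (@terwP X S x _ _ HZ R A).
have HD : forall (K : fieldType) e, has_dim (terwilliger K S x) e <->
    e = #|[set j | (dv 0 j)%:~R != 0 :> K]|.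
  by move=> K e; apply: (dimK uR) => A; exact: HT.
pose cond := forall j, (absz (dv 0%R j) <= 1)%N.
have D3 : cond -> diag_mx dv *m diag_mx dv *m diag_mx dv = diag_mx dv.
  move=> cd; apply/matrixP => i j; rewrite !mul_mx_diag !mxE.
  case: eqP => [->|_]; last by rewrite !mulr0n !mul0r.
  by rewrite !mulr1n cube_int.
have JK : cond -> forall K : fieldType, [set j | (dv 0 j)%:~R != 0 :> K] = [set j | dv 0 j != 0].
  move=> cd K; apply/setP => j; rewrite !inE.
  by case/small_int: (cd j) => ->; rewrite ?rmorph0 ?rmorph1 ?rmorphN1 ?eqxx ?oppr_eq0 ?oner_eq0.
have LHScond : (forall A : 'M[rat]_#|X|,
      (terwilliger rat S x A /\ exists B : 'M[int]_#|X|, A = map_mx intr B)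
      <-> (exists B : 'M[int]_#|X|, terwilliger int S x B /\ A = map_mx intr B)) <-> cond.
  split.
    move=> H; apply: NNPP => ncd.
    have [j nj] := not_all_ex_not _ _ ncd.
    have nz : dv 0 j != 0 by apply: contra_notN nj => /eqP ->.
    set A := vec_mx (row j (map_mx (intr : int -> rat) R0)).
    have eA : A = map_mx intr (vec_mx (row j R0)) by rewrite /A map_vec_mx map_row.
    have QA : terwilliger rat S x A.
      by apply/HT; apply: rowS; rewrite intr_eq0.
    have [B [ZB eB]] := (H A).1 (conj QA (ex_intro _ _ eA)).
    have eB' : B = vec_mx (row j R0) by apply: map_intr_inj; rewrite -eB.
    have [c' Hc'] : exists c, mxvec B = c *m (diag_mx dv *m R0) by apply/HZ; rewrite mxvecK.
    rewrite eB' vec_mxK rowE mulmxA in Hc'.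
    have := congr1 (fun w => (w *m invmx R0) 0 j) Hc'; rewrite /= !mulmxK //.
    rewrite mul_mx_diag !mxE !eqxx => /esym /unit_int; exact: nj.
  move=> cd A; split; last first.
    by move=> [B [ZB ->]]; split; [exact: map_terw | exists B].
  move=> [/HT [c eA] [B0 eB0]]; exists B0; split => //.
  have e1 : mxvec (map_mx (intr : int -> rat) B0) = c *m map_mx intr (diag_mx dv *m R0).
    by rewrite -eB0 eA vec_mxK.
  rewrite -[B0]mxvecK; apply/HZ.
  exists (mxvec B0 *m invmx R0 *m diag_mx dv); apply: map_intr_inj.
  rewrite !map_mxM map_mxvec e1 !map_mxM -!mulmxA; congr (c *m _); rewrite -!map_mxM; congr map_mx.
  by rewrite mulKVmx // !mulmxA D3.
rewrite LHScond; split.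
  move=> cd K e; rewrite !HD !JK //.
move=> H; apply: NNPP => ncd.
have [j nj] := not_all_ex_not _ _ ncd.
have ltj : (1 < absz (dv 0%R j))%N by rewrite ltnNge; apply/negP.
set p := pdiv (absz (dv 0%R j)).
have pr : prime p by apply: pdiv_prime.
have := (H ('F_p : fieldType) _).1 ((HD Ccomplex _).2 erefl).
rewrite HD => eq.
have sub : [set j | (dv 0 j)%:~R != 0 :> 'F_p] \subset [set j | (dv 0 j)%:~R != 0 :> Ccomplex] :\ j.
  apply/subsetP => l; rewrite !inE => nzl; apply/andP; split.
    by apply: contra_neq nzl => ->; rewrite Fp_intr0 // pdiv_dvd.
  by apply: intrC_neq0; apply: contra_neq nzl => ->; rewrite rmorph0.
have := subset_leq_card sub.
rewrite -eq (cardsD1 j [set _ | _]) inE intrC_neq0; last first.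
  by apply/eqP => e0; apply: nj; rewrite e0.
by rewrite add1n ltnn.
Qed.
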